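(* Let $G$ be a connected $(2K_2, K_5-e)$-free graph. Then either $G$ is $(2K_2,\text{diamond})$-free, or there exists a partition $(V_1,\dots,V_5)$ of $V(G)$ (parts possibly empty) such that (i) $G[V_1]$ is a $(2K_2,\text{diamond})$-free graph with $\omega(G[V_1])\le\omega(G)-1$, and (ii) $V_i$ is an independent set for each $i\in\{2,3,4,5\}$.
   Context: All graphs are finite, simple and undirected. $2K_2$ is the disjoint union of two edges. $K_5-e$ is the complete graph on 5 vertices minus one edge. A diamond is $K_4$ minus an edge. A graph is $\mathcal F$-free if it has no induced subgraph isomorphic to a member of $\mathcal F$. $G[S]$ is the subgraph induced by $S$; $\omega$ is the clique number. *)

(* Defs.v *)
From mathcomp Require Import all_boot.
Set Implicit Arguments. Unset Strict Implicit. Unset Printing Implicit Defensive.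

Definition simple_graph (T : finType) (e : rel T) : Prop :=
  symmetric e /\ irreflexive e.

Definition connected (T : finType) (e : rel T) : Prop :=
  forall x y : T, connect e x y.

Definition induced_in (T : finType) (e : rel T) (S : {set T}) (k : nat)
  (h : rel 'I_k) : Prop :=
  exists f : 'I_k -> T, [/\ injective f, (forall i, f i \in S) &
                            forall i j, e (f i) (f j) = h i j].

Definition free_in (T : finType) (e : rel T) (S : {set T}) (k : nat)
  (h : rel 'I_k) : Prop := ~ induced_in e S h.

Definition twoK2 : rel 'I_4 := fun i j =>
  let a := nat_of_ord i in let b := nat_of_ord j in
  ((a == 0) && (b == 1)) || ((a == 1) && (b == 0)) ||
  ((a == 2) && (b == 3)) || ((a == 3) && (b == 2)).

Definition diamond : rel 'I_4 := fun i j =>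
  (i != j) && ~~ ((nat_of_ord i <= 1) && (nat_of_ord j <= 1)).

Definition K5e : rel 'I_5 := fun i j =>
  (i != j) && ~~ ((nat_of_ord i <= 1) && (nat_of_ord j <= 1)).

Definition cliqueb (T : finType) (e : rel T) (A : {set T}) : bool :=
  [forall x, forall y, (x \in A) ==> (y \in A) ==> (x != y) ==> e x y].

Definition omega_in (T : finType) (e : rel T) (S : {set T}) : nat :=
  \max_(A : {set T} | (A \subset S) && cliqueb e A) #|A|.

Definition omega (T : finType) (e : rel T) : nat := omega_in e setT.

Definition independent (T : finType) (e : rel T) (A : {set T}) : Prop :=
  forall x y, x \in A -> y \in A -> ~~ e x y.

(* Main.v *)
Require Import Defs.
From mathcomp Require Import all_boot.
From Stdlib Require Import Classical.

Section Helpers.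
Variables (T : finType) (e : rel T).
Hypothesis sym : symmetric e.
Hypothesis irr : irreflexive e.

Lemma ind_of_seq k (h : rel 'I_k) (s : seq T) x0 :
  size s = k -> uniq s ->
  (forall i j : 'I_k, e (nth x0 s i) (nth x0 s j) = h i j) ->
  induced_in e setT h.
Proof.
move=> Hs Hu He; exists (fun i => nth x0 s i); split => //.
move=> i j /eqP; rewrite nth_uniq ?Hs ?ltn_ord // => /eqP; apply: val_inj.
Qed.

Lemma twoK2_contra x y z w :
  free_in e setT twoK2 ->
  e x y -> e z w -> ~~ e x z -> ~~ e x w -> ~~ e y z -> ~~ e y w -> False.
Proof.
move=> F Exy Ezw Nxz Nxw Nyz Nyw; apply: F.
have Nzx : e z x = false by rewrite sym; apply: negbTE.
have Nwx : e w x = false by rewrite sym; apply: negbTE.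
have Nzy : e z y = false by rewrite sym; apply: negbTE.
have Nwy : e w y = false by rewrite sym; apply: negbTE.
have Eyx : e y x by rewrite sym.
have Ewz : e w z by rewrite sym.
move/negbTE: Nxz => Nxz; move/negbTE: Nxw => Nxw.
move/negbTE: Nyz => Nyz; move/negbTE: Nyw => Nyw.
apply: (@ind_of_seq 4 twoK2 [:: x; y; z; w] x) => //.
  rewrite /= !inE !negb_or; apply/and4P; split.
  - apply/and3P; split; apply/eqP => E; subst.
    + by rewrite irr in Exy.
    + by rewrite Ezw in Nxw.
    + by rewrite Ewz in Nxz.
  - apply/andP; split; apply/eqP => E; subst.
    + by rewrite Ezw in Nyw.
    + by rewrite Ewz in Nyz.
  - by apply/eqP => E; subst; rewrite irr in Ezw.
  - by [].
move=> [[|[|[|[|i]]]] Hi] [[|[|[|[|j]]]] Hj] //=; rewrite /twoK2 /=;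
  by rewrite ?irr.
Qed.

Lemma k5e_contra v0 v1 v2 v3 v4 :
  free_in e setT K5e -> v0 != v1 -> ~~ e v0 v1 ->
  e v0 v2 -> e v0 v3 -> e v0 v4 -> e v1 v2 -> e v1 v3 -> e v1 v4 ->
  e v2 v3 -> e v2 v4 -> e v3 v4 -> False.
Proof.
move=> F N01 n01 e02 e03 e04 e12 e13 e14 e23 e24 e34; apply: F.
have ne : forall a b, e a b -> a != b.
  by move=> a b Eab; apply/eqP => E; subst; rewrite irr in Eab.
have S : forall a b, e a b -> e b a by move=> a b; rewrite sym.
move/negbTE: n01 => n01.
have n10 : e v1 v0 = false by rewrite sym.
apply: (@ind_of_seq 5 K5e [:: v0; v1; v2; v3; v4] v0) => //.
  rewrite /= !inE !negb_or N01 !ne //=.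
move=> [[|[|[|[|[|i]]]]] Hi] [[|[|[|[|[|j]]]]] Hj] //=; rewrite /K5e /=;
  first [by rewrite irr | done | by rewrite sym].
Qed.

Lemma induced_setT (S : {set T}) k (h : rel 'I_k) :
  induced_in e S h -> induced_in e setT h.
Proof. by move=> [f [fi _ fe]]; exists f; split. Qed.

End Helpers.

Theorem theorem3p9 (T : finType) (e : rel T) :
  simple_graph e -> connected e ->
  free_in e setT twoK2 -> free_in e setT K5e ->
  (free_in e setT twoK2 /\ free_in e setT diamond) \/
  exists V : 'I_5 -> {set T},
    [/\ (forall i j, i != j -> [disjoint V i & V j]),
        (\bigcup_(i < 5) V i = setT),
        (free_in e (V ord0) twoK2 /\ free_in e (V ord0) diamond),
        omega_in e (V ord0) <= (omega e).-1 &
        (forall i : 'I_5, i != ord0 -> independent e (V i))].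
Proof.
move=> [sym irr] _ F2 F5.
case: (classic (induced_in e setT diamond)) => [[f [finj _ fe]]|nd]; last by left.
right.
pose i0 : 'I_4 := Ordinal (isT : 0 < 4).
pose i1 : 'I_4 := Ordinal (isT : 1 < 4).
pose i2 : 'I_4 := Ordinal (isT : 2 < 4).
pose i3 : 'I_4 := Ordinal (isT : 3 < 4).
set p := f i0; set q := f i1; set c := f i2; set d := f i3.
have npq : ~~ e p q by rewrite /p /q fe.
have epq : p != q by rewrite (inj_eq finj).
have ecp : e c p by rewrite /c /p fe.
have ecq : e c q by rewrite /c /q fe.
have ecd : e c d by rewrite /c /d fe.
have epd : e p d by rewrite /p /d fe.
have eqd : e q d by rewrite /q /d fe.
pose V (i : 'I_5) : {set T} :=
  match val i with
  | 0 => [set x | e c x]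
  | 1 => [set x | ~~ e c x & ~~ e p x]
  | 2 => [set x | [&& ~~ e c x, e p x & ~~ e q x]]
  | 3 => [set x | [&& ~~ e c x, e p x, e q x & ~~ e d x]]
  | _ => [set x | [&& ~~ e c x, e p x, e q x & e d x]]
  end.
exists V; split.
- move=> [[|[|[|[|[|i]]]]] Hi] [[|[|[|[|[|j]]]]] Hj] //= _;
    rewrite -setI_eq0; apply/eqP/setP => x; rewrite /V /= !inE;
    by case: (e c x); case: (e p x); case: (e q x); case: (e d x).
- apply/setP => x; rewrite inE; apply/bigcupP.
  case Ecx: (e c x); first by exists ord0 => //; rewrite /V inE.
  case Epx: (e p x); last by exists (Ordinal (isT : 1 < 5)) => //; rewrite /V inE Ecx Epx.
  case Eqx: (e q x); last by exists (Ordinal (isT : 2 < 5)) => //; rewrite /V inE Ecx Epx Eqx.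
  case Edx: (e d x); last by exists (Ordinal (isT : 3 < 5)) => //; rewrite /V inE Ecx Epx Eqx Edx.
  by exists (Ordinal (isT : 4 < 5)) => //; rewrite /V inE Ecx Epx Eqx Edx.
- split; first by move/induced_setT.
  move=> [g [ginj gin ge]].
  have gc : forall i, e c (g i) by move=> i; have := gin i; rewrite /V inE.
  apply: (@k5e_contra T e sym irr (g i0) (g i1) (g i2) (g i3) c F5);
    by rewrite ?(inj_eq ginj) ?ge ?gc // sym gc.
- rewrite /omega_in /V /=; apply/bigmax_leqP => A /andP[sub cl].
  have cA : c \notin A.
    by apply/negP => /(subsetP sub); rewrite inE irr.
  have cl' : cliqueb e (c |: A).
    apply/forallP => x; apply/forallP => y; apply/implyP.
    rewrite in_setU1 => /predU1P [->|xA]; apply/implyP;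
      rewrite in_setU1 => /predU1P [->|yA]; apply/implyP => nxy.
    + by rewrite eqxx in nxy.
    + by move/(subsetP sub): yA; rewrite inE.
    + by move/(subsetP sub): xA; rewrite inE sym.
    + by move/forallP: cl => /(_ x) /forallP /(_ y); rewrite xA yA nxy.
  have : #|c |: A| <= omega e.
    rewrite /omega /omega_in; apply: (leq_bigmax_cond (c |: A)).
    by rewrite subsetT cl'.
  rewrite cardsU1 cA /=; case: (omega e) => //.
- move=> [[|[|[|[|[|i]]]]] Hi] //= _ x y; rewrite /V /= !inE.
  + move=> /andP[nxc nxp] /andP[nyc nyp]; apply/negP => exy.
    apply: (@twoK2_contra T e sym irr _ _ _ _ F2 exy ecp); by rewrite // sym.
  + move=> /and3P[nxc _ nxq] /and3P[nyc _ nyq]; apply/negP => exy.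
    apply: (@twoK2_contra T e sym irr _ _ _ _ F2 exy ecq); by rewrite // sym.
  + move=> /and4P[nxc _ _ nxd] /and4P[nyc _ _ nyd]; apply/negP => exy.
    apply: (@twoK2_contra T e sym irr _ _ _ _ F2 exy ecd); by rewrite // sym.
  + move=> /and4P[nxc xp xq xd] /and4P[nyc yp yq yd]; apply/negP => exy.
    by apply: (@k5e_contra T e sym irr _ _ _ _ _ F5 epq npq epd xp yp eqd xq yq xd yd exy).
Qed.
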